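(* Let $n\ge 1$ and $m\ge 2$ be integers with $m\nmid n$, let $\ell=\lfloor n/m\rfloor$, and let $f=\theta_{m,0}+\sum_{i=1}^{\ell}a_i\theta_{m,i}$ with $a_i\in\mathbb{F}_2$. Then the compositional inverse of $f$ is $f^{-1}=\theta_{m,0}+\sum_{j=1}^{\ell}b_j\theta_{m,j}$, where $b_1=a_1$ and, for $j\in\{2,3,\dots,\ell\}$, $b_j=a_j+\sum_{u+v=j,\ u,v\in\{1,\dots,j-1\}}a_ub_v$. Furthermore, $f$ is an involution (i.e. $f\circ f$ is the identity) if and only if $a_i=0$ for every $i\in\{1,2,\dots,\lfloor \ell/2\rfloor\}$.
   Context: For $x=(x_0,\dots,x_{n-1})\in\mathbb{F}_2^n$, indices of coordinates are taken modulo $n$. For a nonnegative integer $k$, the map $\theta_{m,k}\colon\mathbb{F}_2^n\to\mathbb{F}_2^n$ is defined by $\theta_{m,k}(x)=y$ with $y_i=x_{i+mk}\prod_{1\le j\le mk-1,\ m\nmid j}(x_{i+j}+1)$ for $i\in\{0,\dots,n-1\}$; $\theta_{m,0}$ is the identity map. Sums of maps are pointwise sums over $\mathbb{F}_2^n$; arithmetic on the coefficients is in $\mathbb{F}_2$. *)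

(* Defs.v *)
From HB Require Import structures.
From mathcomp Require Import all_boot all_order all_algebra.
Set Implicit Arguments. Unset Strict Implicit. Unset Printing Implicit Defensive.
Import GRing.Theory.
Local Open Scope ring_scope.

Definition vec (n : nat) := {ffun 'I_n -> 'F_2}.

(* Coordinate x_k with the index k taken modulo n (n >= 1 in all uses). *)
Definition coord (n : nat) (x : vec n) (k : nat) : 'F_2 :=
  odflt 0 (omap x (insub (k %% n)%N : option 'I_n)).

Definition theta (n m k : nat) (x : vec n) : vec n :=
  [ffun i : 'I_n => coord x (i + m * k)%N *
     \prod_(1 <= j < m * k | ~~ (m %| j)%N) (coord x (i + j)%N + 1)].

Definition thsum (n m l : nat) (c : nat -> 'F_2) (x : vec n) : vec n :=
  [ffun t : 'I_n => theta m 0 x t + \sum_(1 <= i < l.+1) c i * theta m i x t].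

(* Main.v *)
Require Import Defs.
From mathcomp Require Import all_boot all_order all_algebra zify.
From Stdlib Require Import FunctionalExtensionality.
Import GRing.Theory.
Local Open Scope ring_scope.
Lemma F2_01 (x : 'F_2) : x = 0 \/ x = 1.
Proof. case: x => [[|[|k]] H]; [left|right|]; try by apply/val_inj. by []. Qed.
Lemma F2_dbl (x : 'F_2) : x + x = 0.
Proof. by case: (F2_01 x) => ->; apply/val_inj. Qed.
Lemma F2_sq (x : 'F_2) : x * (x + 1) = 0.
Proof. by case: (F2_01 x) => ->; apply/val_inj. Qed.
Lemma F2_ne0 (x : 'F_2) : x <> 0 -> x = 1.
Proof. by case: (F2_01 x). Qed.
Lemma F2_p1 (x : 'F_2) : x + 1 = 0 -> x = 1.
Proof. by case: (F2_01 x) => -> //; move/eqP; rewrite add0r oner_eq0. Qed.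

Lemma prod_zero (F : nat -> 'F_2) (P : pred nat) a N j0 :
  (a <= j0 < N)%N -> P j0 -> F j0 = 0 -> \prod_(a <= j < N | P j) F j = 0.
Proof.
move=> hj Pj Fj; rewrite big_mkcond (bigD1_seq j0) /= ?mem_index_iota ?iota_uniq //.
by rewrite Pj Fj mul0r.
Qed.

Lemma prod_one (F : nat -> 'F_2) (P : pred nat) a N :
  (forall j, (a <= j < N)%N -> P j -> F j = 1) -> \prod_(a <= j < N | P j) F j = 1.
Proof.
move=> H; rewrite big1_seq // => j /andP[Pj]; rewrite mem_index_iota => hj.
exact: H.
Qed.

Lemma prod_ne0 (F : nat -> 'F_2) (P : pred nat) a N j :
  \prod_(a <= j < N | P j) F j <> 0 -> (a <= j < N)%N -> P j -> F j <> 0.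
Proof. by move=> H hj Pj Fj; apply: H; apply: (@prod_zero F P a N j). Qed.

Lemma sum_ne0 (F : nat -> 'F_2) a N :
  \sum_(a <= j < N) F j <> 0 -> exists j, (a <= j < N)%N /\ F j <> 0.
Proof.
move=> H; case E: (has (fun j => F j != 0) (index_iota a N)).
  by case/hasP: E => j; rewrite mem_index_iota => hj /eqP Fj; exists j.
exfalso; apply: H; rewrite big1_seq // => j /andP[_] hj.
by move/hasPn: E => /(_ j hj) /negPn /eqP.
Qed.

Definition Th (m k : nat) (X : nat -> 'F_2) (i : nat) : 'F_2 :=
  X (i + m * k)%N * \prod_(1 <= j < m * k | ~~ (m %| j)%N) (X (i + j)%N + 1).

Lemma ThE0 m k X i : Th m k X i =
  X (i + m*k)%N * \prod_(0 <= j < m*k | ~~ (m %| j)%N) (X (i+j)%N + 1).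
Proof.
rewrite /Th; case: (m*k)%N => [|N]; first by rewrite !big_geq.
by rewrite [in RHS]big_ltn_cond // dvdn0.
Qed.

Definition cz (c : nat -> 'F_2) i := if i is 0 then 1 else c i.
Definition Gs m L d X i := \sum_(0 <= j < L.+1) cz d j * Th m j X i.

Lemma Gs_split m L d X i : Gs m L d X i = X i + \sum_(1 <= j < L.+1) d j * Th m j X i.
Proof.
rewrite /Gs big_ltn //= mul1r /Th muln0 addn0 big_geq // mulr1; congr (_ + _).
by apply: eq_big_nat => -[|j].
Qed.

Lemma F2_p1n (x : 'F_2) : x + 1 <> 0 -> x = 0.
Proof. by case: (F2_01 x) => -> //; rewrite F2_dbl. Qed.

Lemma mulne0 (x y : 'F_2) : x * y <> 0 -> x <> 0 /\ y <> 0.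
Proof. by move=> H; split=> E; apply: H; rewrite E ?mul0r ?mulr0. Qed.

Lemma ndiv_sub m p f : (f <= p)%N -> (m %| p)%N -> ~~ (m %| f)%N -> ~~ (m %| p - f)%N.
Proof.
move=> fp mp nf; apply/negP => ms; move: mp; rewrite -(subnK fp) dvdn_addr //.
by apply/negP.
Qed.

Lemma L1 (m L : nat) d X f p : (0 < m)%N -> ~~ (m %| f)%N -> X f = 1 -> (m %| p)%N ->
  (f < p)%N -> X p = 1 -> (forall s, (f < s < p)%N -> ~~ (m %| s)%N -> X s = 0) ->
  Gs m L d X f = 1.
Proof.
move=> m0 nf Xf mp fp Xp H.
rewrite Gs_split Xf big1_seq ?addr0 // => j /andP[_]; rewrite mem_index_iota => /andP[j1 _].
rewrite ThE0.
have nd : ~~ (m %| f + m*j)%N by rewrite dvdn_addl ?dvdn_mulr.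
have mj : (0 < m * j)%N by rewrite muln_gt0 m0.
case: (ltngtP (f + m*j)%N p) => h.
- by rewrite (H (f+m*j)%N) ?mul0r ?mulr0 ?nd //; lia.
- rewrite (@prod_zero _ _ _ _ (p - f)) ?mulr0 //; first by lia.
  + exact: ndiv_sub (ltnW fp) mp nf.
  + by rewrite subnKC ?(ltnW fp) // Xp F2_dbl.
- by move: nd; rewrite h mp.
Qed.

Section Key.
Variables (m L k : nat) (d : nat -> 'F_2) (X : nat -> 'F_2).
Hypothesis m0 : (0 < m)%N.
Let Y := Gs m L d X.
Let Rk := \sum_(0 <= j < L.+1) cz d j * Th m (k + j) X 0.

Lemma Ya : (forall t, (t < m*k)%N -> ~~ (m %| t)%N -> X t = 0) -> Y (m*k)%N = Rk.
Proof.
move=> H; rewrite /Y /Rk /Gs; apply: eq_big_nat => j _; congr (_ * _).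
rewrite !ThE0 add0n mulnDr; congr (_ * _).
rewrite [in RHS](@big_cat_nat _ _ _ (m*k)%N 0 _ _ _ (leq0n _) (leq_addr _ _)) /=.
rewrite [X in _ = X * _]prod_one; last first.
  by move=> t /andP[_ ht] nt; rewrite add0n H // add0r.
rewrite mul1r -{2}(add0n (m*k)%N) big_addn addKn; apply: eq_big => [t|t _].
  by rewrite dvdn_addl ?dvdn_mulr.
by rewrite add0n addnC.
Qed.

Lemma Yb : Rk <> 0 -> forall t, (t < m*k)%N -> ~~ (m %| t)%N -> Y t = 0.
Proof.
move=> /sum_ne0 [j1 [_ /mulne0 [_]]]; rewrite ThE0 add0n => /mulne0 [Xv Pv].
set v := (m * (k + j1))%N in Xv Pv.
have hv : forall s, (s < v)%N -> ~~ (m %| s)%N -> X s = 0.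
  move=> s sv ns; apply: F2_p1n; have := @prod_ne0 _ _ _ _ s Pv; rewrite add0n; apply => //.
move=> t tk nt; case: (F2_01 (Y t)) => // Yt.
have : Y t <> 0 by rewrite Yt; apply/eqP; apply: oner_neq0.
rewrite /Y /Gs => /sum_ne0 [j2 [_ /mulne0 [_]]]; rewrite ThE0 => /mulne0 [Xu Pu].
have nu : ~~ (m %| t + m * j2)%N by rewrite dvdn_addl ?dvdn_mulr.
have mv : (m %| v)%N by rewrite dvdn_mulr.
have tv : (t < v)%N by rewrite /v mulnDr; lia.
exfalso; case: (ltngtP (t + m*j2)%N v) => h.
- by apply: Xu; apply: hv.
- apply: Xv; have := @prod_ne0 _ _ _ _ (v - t)%N Pu.
  rewrite subnKC ?(ltnW tv) // => H.
  apply: F2_p1n; apply: H; [lia | exact: ndiv_sub (ltnW tv) mv nt].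
- by move: nu; rewrite h mv.
Qed.

Lemma K0 : Th m k Y 0 = Rk.
Proof.
rewrite ThE0 add0n.
under eq_bigr do rewrite add0n.
case E: (has (fun f => ~~ (m %| f)%N && (X f == 1)) (index_iota 0 (m*k)%N)).
- have R0 : Rk = 0.
    case/hasP: E => f; rewrite mem_index_iota => fk /andP[nf /eqP Xf].
    rewrite /Rk big1_seq // => j _; rewrite ThE0 (@prod_zero _ _ _ _ f) ?mulr0 //.
      by rewrite mulnDr; lia.
    by rewrite add0n Xf F2_dbl.
  rewrite R0.
  pose P f := [&& (f < m * k)%N, ~~ (m %| f)%N & X f == 1].
  have exP : exists f, P f.
    by case/hasP: E => f; rewrite mem_index_iota => fk /andP[nf Xf]; exists f; rewrite /P nf Xf andbT; lia.
  have leP : forall f, P f -> (f <= m * k)%N by move=> f /and3P[h _ _]; lia.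
  case: (ex_maxnP exP leP) => f /and3P[fk nf /eqP Xf] maxf.
  case: (F2_01 (Y (m*k)%N)) => [-> | Y1]; first by rewrite mul0r.
  have : Y (m * k)%N <> 0 by rewrite Y1; apply/eqP; apply: oner_neq0.
  rewrite /Y /Gs => /sum_ne0 [j [_ /mulne0 [_]]]; rewrite ThE0 => /mulne0 [Xp Pp].
  have Yf : Y f = 1.
    apply: (@L1 _ _ _ _ _ (m * k + m * j)%N) => //.
    + by rewrite dvdn_add ?dvdn_mulr.
    + lia.
    + exact: F2_ne0.
    + move=> s /andP[fs sp] ns; case: (ltnP s (m*k)%N) => sk.
        case: (F2_01 (X s)) => // Xs1; have : P s by rewrite /P sk ns Xs1 eqxx.
        by move/maxf; lia.
      have := @prod_ne0 _ _ _ _ (s - m * k)%N Pp; rewrite subnKC // => H.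
      apply: F2_p1n; apply: H; first lia.
      apply/negP => hs; move/negP: ns; apply; rewrite -(subnK sk) dvdn_add //.
      by rewrite dvdn_mulr.
  rewrite (@prod_zero _ _ _ _ f) ?mulr0 //; try lia.
  by move: Yf; rewrite /Y /Gs => ->; rewrite F2_dbl.
- have H : forall t, (t < m*k)%N -> ~~ (m %| t)%N -> X t = 0.
    move=> t tk nt; case: (F2_01 (X t)) => // Xt.
    move/hasPn: E => /(_ t); rewrite mem_index_iota nt Xt eqxx /= => /(_ tk).
    done.
  rewrite (Ya H); case: (F2_01 Rk) => [-> | R1]; first by rewrite mul0r.
  rewrite R1 mul1r prod_one // => t /andP[_ tk] nt.
  rewrite (@Yb _ t tk nt) ?add0r // R1; apply/eqP; exact: oner_neq0.
Qed.
End Key.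

Lemma Th_shift m k X i : Th m k X i = Th m k (fun s => X (i + s)%N) 0.
Proof.
rewrite /Th add0n; congr (_ * _); apply: eq_bigr => j _; by rewrite add0n.
Qed.

Lemma Gs_shift m L d X i s : Gs m L d (fun s => X (i + s)%N) s = Gs m L d X (i + s)%N.
Proof.
rewrite /Gs; apply: eq_bigr => j _; rewrite /Th addnA; congr (_ * (_ * _)).
by apply: eq_bigr => t _; rewrite addnA.
Qed.

Lemma K m L k d X i : (0 < m)%N ->
  Th m k (Gs m L d X) i = \sum_(0 <= j < L.+1) cz d j * Th m (k + j) X i.
Proof.
move=> m0; rewrite Th_shift.
have -> : (fun s => Gs m L d X (i + s)%N) = Gs m L d (fun s => X (i + s)%N).
  by apply: functional_extensionality => s; rewrite Gs_shift.
rewrite K0 //; apply: eq_bigr => j _; by rewrite [in RHS]Th_shift.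
Qed.

Lemma sum_widen (G : nat -> 'F_2) s L : (s <= L)%N ->
  \sum_(0 <= i < s.+1) G i = \sum_(0 <= i < L.+1) (if (i <= s)%N then G i else 0).
Proof.
move=> sL; rewrite (@big_cat_nat _ _ _ s.+1 0 L.+1) //= [X in _ = _ + X]big1_seq ?addr0.
  by apply: eq_big_nat => i /andP[_ h]; rewrite -ltnS h.
by move=> i /andP[_]; rewrite mem_index_iota => /andP[h _]; rewrite leqNgt h.
Qed.

Lemma reidx L (c d F : nat -> 'F_2) : (forall s, (L < s)%N -> F s = 0) ->
  \sum_(0 <= i < L.+1) c i * \sum_(0 <= j < L.+1) d j * F (i + j)%N =
  \sum_(0 <= s < L.+1) (\sum_(0 <= i < s.+1) c i * d (s - i)%N) * F s.
Proof.
move=> HF; symmetry.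
rewrite (eq_big_nat _ _ (F2 := fun s => \sum_(0 <= i < L.+1)
   (if (i <= s)%N then c i * d (s - i)%N * F s else 0))); last first.
  move=> s /andP[_ sL]; rewrite (@sum_widen _ s L) // mulr_suml; apply: eq_bigr => i _.
  by case: ifP; rewrite ?mul0r.
rewrite exchange_big /=; apply: eq_big_nat => i /andP[_ iL]; symmetry.
rewrite mulr_sumr.
rewrite (@big_cat_nat _ _ _ (L.+1 - i)%N 0 L.+1) //=; last by lia.
rewrite [X in _ + X = _]big1_seq ?addr0; last first.
  move=> j /andP[_]; rewrite mem_index_iota => /andP[h _]; rewrite HF ?mulr0 //; lia.
rewrite (@big_cat_nat _ _ _ i 0 L.+1) //=; last by lia.
rewrite [X in _ = X + _]big1_seq ?add0r; last first.
  by move=> s /andP[_]; rewrite mem_index_iota => /andP[_ h]; rewrite leqNgt h.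
have E : forall G : nat -> 'F_2,
    \sum_(i <= s < L.+1) G s = \sum_(0 <= j < L.+1 - i) G (j + i)%N.
  by move=> G; rewrite -{1}(add0n i) big_addn.
rewrite E; apply: eq_bigr => j _; by rewrite leq_addl addnK mulrA addnC.
Qed.


Lemma coordE n (x : vec n) (s : nat) (n0 : (0 < n)%N) : Defs.coord x s = (x : {ffun 'I_n -> 'F_2}) (Ordinal (ltn_pmod s n0)).
Proof. rewrite /Defs.coord; case: insubP => [u _ hu|]; last by rewrite ltn_pmod. by rewrite /=; congr (x _); apply: val_inj. Qed.

Lemma coord_mod n (x : vec n) s : (0 < n)%N -> Defs.coord x (s %% n)%N = Defs.coord x s.
Proof. by move=> n0; rewrite !(coordE _ _ _ n0); congr (x _); apply: val_inj; rewrite /= modn_mod. Qed.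

Lemma coord_add n (x : vec n) s c : (0 < n)%N -> Defs.coord x (s %% n + c)%N = Defs.coord x (s + c)%N.
Proof. by move=> n0; rewrite -coord_mod // modnDml coord_mod. Qed.

Lemma Th_mod n (x : vec n) m k s : (0 < n)%N -> Th m k (Defs.coord x) (s %% n)%N = Th m k (Defs.coord x) s.
Proof.
move=> n0; rewrite /Th coord_add //; congr (_ * _); apply: eq_bigr => j _.
by rewrite coord_add.
Qed.

Lemma thsum_at n m L c (x : vec n) (t : 'I_n) :
  thsum m L c x t = Gs m L c (Defs.coord x) t.
Proof.
rewrite ffunE /Gs [in RHS]big_ltn //= mul1r; congr (_ + _); first by rewrite ffunE.
by apply: eq_big_nat => -[|j] //= _; rewrite ffunE.
Qed.

Lemma thsum_coord n m L c (x : vec n) : (0 < n)%N ->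
  Defs.coord (thsum m L c x) = Gs m L c (Defs.coord x).
Proof.
move=> n0; apply: functional_extensionality => s.
rewrite coordE thsum_at /=; rewrite /Gs; apply: eq_bigr => j _.
by rewrite Th_mod.
Qed.

Lemma Th_big n m k (x : vec n) i : (0 < n)%N -> ~~ (m %| n)%N -> (n < m * k)%N ->
  Th m k (Defs.coord x) i = 0.
Proof.
move=> n0 nmn nk; rewrite ThE0.
have E : Defs.coord x (i + m * k)%N = Defs.coord x (i + (m * k - n))%N.
  have -> : (i + m * k = (i + (m * k - n)) + n)%N by lia.
  by rewrite -coord_mod // modnDr coord_mod.
case: (F2_01 (Defs.coord x (i + m * k)%N)) => [->|X1]; first by rewrite mul0r.
rewrite (@prod_zero _ _ _ _ (m * k - n)%N) ?mulr0 //; first lia.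
  apply/negP => h; move/negP: nmn; apply.
  have : (m %| (m * k - n) + n)%N by rewrite subnK ?dvdn_mulr //; lia.
  by rewrite dvdn_addr.
by rewrite -E X1 F2_dbl.
Qed.

Definition Cf (c d : nat -> 'F_2) s := \sum_(0 <= i < s.+1) cz c i * cz d (s - i)%N.

Lemma compF n m L c d (x : vec n) (t : 'I_n) : (0 < n)%N -> (0 < m)%N -> ~~ (m %| n)%N ->
  (forall s, (L < s)%N -> (n < m * s)%N) ->
  thsum m L c (thsum m L d x) t =
  \sum_(0 <= s < L.+1) Cf c d s * Th m s (Defs.coord x) t.
Proof.
move=> n0 m0 nmn hL.
rewrite thsum_at thsum_coord // /Gs.
under eq_bigr do rewrite K //.
apply: reidx => s Ls; exact: Th_big (hL s Ls).
Qed.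

Lemma Csplit c d s : (0 < s)%N ->
  Cf c d s = c s + d s + \sum_(1 <= i < s) c i * d (s - i)%N.
Proof.
case: s => // s _; rewrite /Cf big_ltn // subn0 /= mul1r big_nat_recr //= subnn mulr1.
rewrite (eq_big_nat _ _ (F2 := fun i => c i * d (s.+1 - i)%N)); last first.
  move=> [|i] //= h; rewrite subSS; case E: (s - i)%N => [|k] //; lia.
by rewrite (addrC (\sum_(1 <= i < s.+1) _)) addrA (addrC (d _)).
Qed.

Lemma Cf_sym c d s : Cf c d s = Cf d c s.
Proof.
rewrite /Cf big_nat_rev /=; apply: eq_big_nat => i /andP[_ h].
rewrite add0n subSS subKn; [exact: mulrC | lia].
Qed.

Lemma Cf0 c d : Cf c d 0 = 1.
Proof. by rewrite /Cf big_nat1 /= mul1r. Qed.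

Lemma F2_idem (x : 'F_2) : x * x = x.
Proof. by case: (F2_01 x) => ->; apply/val_inj. Qed.

Lemma comp_id n m L c d (x : vec n) : (0 < n)%N -> (0 < m)%N -> ~~ (m %| n)%N ->
  (forall s, (L < s)%N -> (n < m * s)%N) ->
  (forall s, (1 <= s <= L)%N -> Cf c d s = 0) ->
  thsum m L c (thsum m L d x) = x.
Proof.
move=> n0 m0 nmn hL hC; apply/ffunP => t.
rewrite compF // big_ltn // Cf0 mul1r big1_seq ?addr0.
  rewrite /Th muln0 addn0 big_geq // mulr1 (coordE _ _ _ n0); congr (x _).
  by apply: val_inj; rewrite /= modn_small.
by move=> s /andP[_]; rewrite mem_index_iota => h; rewrite hC ?mul0r.
Qed.

Theorem proposition1 (n m : nat) (a b : nat -> 'F_2) :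
  (1 <= n)%N -> (2 <= m)%N -> ~~ (m %| n)%N ->
  b 1%N = a 1%N ->
  (forall j : nat, (2 <= j <= n %/ m)%N ->
     b j = a j + \sum_(1 <= u < j) a u * b (j - u)%N) ->
  ((forall x : vec n, thsum m (n %/ m) a (thsum m (n %/ m) b x) = x) /\
   (forall x : vec n, thsum m (n %/ m) b (thsum m (n %/ m) a x) = x)) /\
  ((forall x : vec n, thsum m (n %/ m) a (thsum m (n %/ m) a x) = x) <->
   (forall i : nat, (1 <= i <= (n %/ m)./2)%N -> a i = 0)).
Proof.
move=> n0 m2 nmn hb1 hb.
have m0 : (0 < m)%N by lia.
set L := (n %/ m)%N.
have dq := divn_eq n m; have rm := ltn_pmod n m0.
have rn : (n %% m != 0)%N by [].
have hL : forall s, (L < s)%N -> (n < m * s)%N.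
  move=> s Ls; have : (m * L.+1 <= m * s)%N by rewrite leq_mul2l Ls orbT.
  rewrite mulnS /L; lia.
have LmN : (m * L < n)%N by rewrite /L; lia.
have Cab : forall s, (1 <= s <= L)%N -> Cf a b s = 0.
  move=> s /andP[s1 sL]; rewrite Csplit //.
  case: (ltngtP s 1) => h; first lia.
    by rewrite hb ?addrA ?F2_dbl ?add0r ?F2_dbl //; apply/andP; split.
  by rewrite h big_geq // addr0 hb1 F2_dbl.
split.
  by split => x; apply: comp_id => // s hs; rewrite ?Cab // Cf_sym Cab.
split.
- move=> H; elim/ltn_ind => r IH /andP[r1 rL].
  have r2L : (2 * r <= L)%N by move: rL; rewrite -divn2; lia.
  have Cr : Cf a a (2 * r) = a r.
    rewrite Csplit; last lia.
    rewrite F2_dbl add0r (@big_cat_nat _ _ _ r 1 (2 * r)) //=; last lia.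
    rewrite big1_seq ?add0r; last first.
      move=> i /andP[_]; rewrite mem_index_iota => hi.
      by rewrite IH ?mul0r //; [lia | apply/andP; split; lia].
    rewrite big_ltn; last lia.
    rewrite big1_seq ?addr0; last first.
      move=> i /andP[_]; rewrite mem_index_iota => hi.
      by rewrite (IH (2 * r - i)%N) ?mulr0 //; [lia | apply/andP; split; lia].
    rewrite (_ : (2 * r - r = r)%N); last lia.
    exact: F2_idem.
  pose x : vec n := [ffun t : 'I_n => if (val t == 2 * r * m)%N then 1 else 0].
  have cx : forall j, (j < n)%N -> Defs.coord x j = if (j == 2 * r * m)%N then 1 else 0.
    move=> j jn; rewrite (coordE _ _ _ n0) ffunE /= modn_small //.
  have := H x; move/ffunP => /(_ (Ordinal n0)).
  rewrite compF // ffunE /=.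
  have -> : (0 == 2 * r * m)%N = false by apply/negbTE; lia.
  rewrite (eq_big_nat _ _ (F2 := fun s => Cf a a s * (if (s == 2 * r)%N then 1 else 0))); last first.
    move=> s /andP[_ sL]; congr (_ * _).
    rewrite /Th add0n prod_one; last first.
      move=> j /andP[_ js] nj; rewrite add0n cx; last first.
        have : (m * s <= m * L)%N by rewrite leq_mul2l -ltnS sL orbT.
        lia.
      case: eqP => [E|_]; last by rewrite add0r.
      by exfalso; move/negP: nj; apply; rewrite E dvdn_mull.
    rewrite mulr1 cx; last first.
      have : (m * s <= m * L)%N by rewrite leq_mul2l -ltnS sL orbT.
      lia.
    by rewrite [(2 * r * m)%N]mulnC eqn_pmul2l.
  rewrite (bigD1_seq (2 * r)%N) ?iota_uniq //=; last by rewrite mem_index_iota; lia.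
  rewrite eqxx mulr1 big1_seq ?addr0; first by rewrite Cr.
  by move=> s /andP[ns _]; rewrite (negbTE ns) mulr0.
- move=> H x; apply: comp_id => // s /andP[s1 sL].
  rewrite Csplit // F2_dbl add0r big1_seq // => i /andP[_]; rewrite mem_index_iota => hi.
  have : (i <= L./2)%N || (s - i <= L./2)%N by rewrite -divn2; lia.
  case/orP => h.
    by rewrite H ?mul0r //; apply/andP; split; lia.
  by rewrite (H (s - i)%N) ?mulr0 //; apply/andP; split; lia.
Qed.
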